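(* Let $A,B\in M_2(\mathbb{Z})$ be expanding matrices with characteristic polynomials $x^2+px+q$ and $x^2-px+q$ respectively ($p,q\in\mathbb{Z}$). Let $v,w\in\mathbb{R}^2$ be nonzero vectors such that $\{v,Av\}$ and $\{w,Bw\}$ are each linearly independent. Let $c_i,d_i\in\mathbb{Z}$ for $i=0,1,\dots,|q|-1$ be such that the points $c_iAv+d_iv$ are pairwise distinct, and put $\mathcal{D}=\{c_iAv+d_iv: i=0,\dots,|q|-1\}$ and $\mathcal{D}'=\{-c_iBw+d_iw: i=0,\dots,|q|-1\}$. Then $T(A,\mathcal{D})$ is connected if and only if $T(B,\mathcal{D}')$ is connected.
   Context: A real square matrix is expanding if all its eigenvalues have modulus strictly larger than $1$. For an expanding matrix $A\in M_n(\mathbb{Z})$ and a finite set $\mathcal{D}\subset\mathbb{R}^n$ with $|\mathcal D|=|\det A|$, the self-affine set $T(A,\mathcal{D})$ is the unique nonempty compact set $T$ with $AT=T+\mathcal{D}$; equivalently $T=\{\sum_{i=1}^\infty A^{-i}d_{j_i}: d_{j_i}\in\mathcal{D}\}$. *)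

(* Defs.v *)
From Stdlib Require Import Reals Lra ZArith.
Open Scope R_scope.

Definition vec : Type := (R * R)%type.
Definition vadd (u w : vec) : vec := (fst u + fst w, snd u + snd w).
Definition vscale (a : R) (u : vec) : vec := (a * fst u, a * snd u).
Definition vzero : vec := (0, 0).
Definition vdist (u w : vec) : R :=
  sqrt ((fst u - fst w) ^ 2 + (snd u - snd w) ^ 2).

Definition lin_indep2 (u w : vec) : Prop :=
  forall a b : R, vadd (vscale a u) (vscale b w) = vzero -> a = 0 /\ b = 0.

Record mat2 : Type := Mat2 { m11 : Z; m12 : Z; m21 : Z; m22 : Z }.

Definition mtrace (A : mat2) : Z := (m11 A + m22 A)%Z.
Definition mdet (A : mat2) : Z := (m11 A * m22 A - m12 A * m21 A)%Z.

Definition mapply (A : mat2) (u : vec) : vec :=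
  (IZR (m11 A) * fst u + IZR (m12 A) * snd u,
   IZR (m21 A) * fst u + IZR (m22 A) * snd u).

(** A^{-1} acting on R^2 (A^{-1} = adj A / det A; meaningful when det A <> 0) *)
Definition minv_apply (A : mat2) (u : vec) : vec :=
  let d := IZR (mdet A) in
  ((IZR (m22 A) * fst u - IZR (m12 A) * snd u) / d,
   (- IZR (m21 A) * fst u + IZR (m11 A) * snd u) / d).

Fixpoint minv_pow (A : mat2) (i : nat) (u : vec) : vec :=
  match i with
  | O => u
  | S k => minv_apply A (minv_pow A k u)
  end.

(** Characteristic polynomial of A is x^2 + p x + q, i.e. det(xI - A) = x^2 - tr(A) x + det(A). *)
Definition charpoly_is (A : mat2) (p q : Z) : Prop :=
  (- mtrace A = p)%Z /\ mdet A = q.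

(** Complex numbers as pairs (re, im) *)
Definition cmul (z w : R * R) : R * R :=
  (fst z * fst w - snd z * snd w, fst z * snd w + snd z * fst w).
Definition cnorm2 (z : R * R) : R := fst z ^ 2 + snd z ^ 2.

(** lam (complex) is an eigenvalue of A: there is a nonzero (x1, x2) in C^2
    with A (x1, x2) = lam (x1, x2). *)
Definition is_eigenvalue (A : mat2) (lam : R * R) : Prop :=
  exists x1 x2 : R * R,
    (x1 <> (0, 0) \/ x2 <> (0, 0)) /\
    (IZR (m11 A) * fst x1 + IZR (m12 A) * fst x2,
     IZR (m11 A) * snd x1 + IZR (m12 A) * snd x2) = cmul lam x1 /\
    (IZR (m21 A) * fst x1 + IZR (m22 A) * fst x2,
     IZR (m21 A) * snd x1 + IZR (m22 A) * snd x2) = cmul lam x2.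

Definition expanding (A : mat2) : Prop :=
  forall lam, is_eigenvalue A lam -> cnorm2 lam > 1.

Fixpoint partial_sum (A : mat2) (dig : nat -> vec) (n : nat) : vec :=
  match n with
  | O => vzero
  | S k => vadd (partial_sum A dig k) (minv_pow A (S k) (dig (S k)))
  end.

Definition self_affine (A : mat2) (D : vec -> Prop) : vec -> Prop :=
  fun x => exists dig : nat -> vec,
    (forall i, D (dig i)) /\
    Un_cv (fun n => fst (partial_sum A dig n)) (fst x) /\
    Un_cv (fun n => snd (partial_sum A dig n)) (snd x).

Definition open2 (U : vec -> Prop) : Prop :=
  forall x, U x -> exists eps, eps > 0 /\ forall y, vdist x y < eps -> U y.

Definition connected2 (S : vec -> Prop) : Prop :=
  ~ exists U V : vec -> Prop,
      open2 U /\ open2 V /\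
      (forall x, S x -> U x \/ V x) /\
      (exists x, S x /\ U x) /\ (exists x, S x /\ V x) /\
      (forall x, S x -> U x -> V x -> False).

(* Main.v *)
Require Import Defs.
From Stdlib Require Import Reals Lra Lia ZArith Classical ClassicalEpsilon Arith.
Open Scope R_scope.

Definition vsub (u w : vec) : vec := (fst u - fst w, snd u - snd w).
Definition n1 (u : vec) : R := Rabs (fst u) + Rabs (snd u).

Definition linear (N : vec -> vec) : Prop :=
  (forall u w, N (vadd u w) = vadd (N u) (N w)) /\
  (forall a u, N (vscale a u) = vscale a (N u)).

Fixpoint it (N : vec -> vec) (i : nat) (u : vec) : vec :=
  match i with O => u | S k => N (it N k u) end.

Fixpoint PS (N : vec -> vec) (dig : nat -> vec) (n : nat) : vec :=
  match n with O => vzero | S k => vadd (PS N dig k) (it N (S k) (dig (S k))) end.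

Definition cv (s : nat -> vec) (x : vec) : Prop :=
  forall eps, 0 < eps -> exists N, forall n, (N <= n)%nat -> n1 (vsub (s n) x) < eps.

Definition Tset N (Dig : nat -> vec -> Prop) (x : vec) : Prop :=
  exists dig, (forall i, Dig i (dig i)) /\ cv (PS N dig) x.

Definition contr (N : vec -> vec) (K r : R) : Prop :=
  0 < K /\ 0 < r < 1 /\ forall n u, n1 (it N n u) <= K * r ^ n * n1 u.

Lemma vec_eq (u w : vec) : fst u = fst w -> snd u = snd w -> u = w.
Proof. destruct u, w; simpl; intros; subst; reflexivity. Qed.

Lemma n1_ge0 u : 0 <= n1 u.
Proof. unfold n1; pose proof (Rabs_pos (fst u)); pose proof (Rabs_pos (snd u)); lra. Qed.

Lemma n1_add u w : n1 (vadd u w) <= n1 u + n1 w.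
Proof. unfold n1, vadd; simpl.
  pose proof (Rabs_triang (fst u) (fst w)); pose proof (Rabs_triang (snd u) (snd w)); lra. Qed.

Lemma n1_scale a u : n1 (vscale a u) = Rabs a * n1 u.
Proof. unfold n1, vscale; simpl. rewrite !Rabs_mult; ring. Qed.

Lemma n1_sub_tri u w z : n1 (vsub u z) <= n1 (vsub u w) + n1 (vsub w z).
Proof. unfold n1, vsub; simpl.
  pose proof (Rabs_triang (fst u - fst w) (fst w - fst z)).
  pose proof (Rabs_triang (snd u - snd w) (snd w - snd z)).
  replace (fst u - fst w + (fst w - fst z)) with (fst u - fst z) in * by ring.
  replace (snd u - snd w + (snd w - snd z)) with (snd u - snd z) in * by ring. lra. Qed.

Lemma n1_sub_sym u w : n1 (vsub u w) = n1 (vsub w u).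
Proof. unfold n1, vsub; simpl. rewrite (Rabs_minus_sym (fst u)), (Rabs_minus_sym (snd u)); ring. Qed.

Lemma n1_sub_self u : n1 (vsub u u) = 0.
Proof. unfold n1, vsub; simpl. rewrite !Rminus_diag, Rabs_R0; ring. Qed.

Lemma n1_zero_eq u w : n1 (vsub u w) <= 0 -> u = w.
Proof. unfold n1, vsub; simpl; intro H.
  pose proof (Rabs_pos (fst u - fst w)); pose proof (Rabs_pos (snd u - snd w)).
  assert (Rabs (fst u - fst w) = 0) by lra. assert (Rabs (snd u - snd w) = 0) by lra.
  apply vec_eq.
  destruct (Req_dec (fst u - fst w) 0). lra. apply Rabs_no_R0 in H4; contradiction.
  destruct (Req_dec (snd u - snd w) 0). lra. apply Rabs_no_R0 in H4; contradiction. Qed.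

Lemma vsub_vadd u w : vsub u w = vadd u (vscale (-1) w).
Proof. apply vec_eq; simpl; ring. Qed.

Lemma lin_sub N : linear N -> forall u w, N (vsub u w) = vsub (N u) (N w).
Proof. intros [Ha Hs] u w. rewrite !vsub_vadd, Ha, Hs; reflexivity. Qed.

Lemma lin_zero N : linear N -> N vzero = vzero.
Proof. intros [Ha Hs]. replace vzero with (vscale 0 vzero) by (apply vec_eq; simpl; ring).
  rewrite Hs. apply vec_eq; simpl; ring. Qed.

Lemma lin_decomp N : linear N -> forall u,
  N u = vadd (vscale (fst u) (N (1,0))) (vscale (snd u) (N (0,1))).
Proof. intros [Ha Hs] u. rewrite <- !Hs, <- Ha. f_equal. apply vec_eq; simpl; ring. Qed.

Lemma lin_bound N : linear N -> exists C, 0 <= C /\ forall u, n1 (N u) <= C * n1 u.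
Proof. intros HN. exists (n1 (N (1,0)) + n1 (N (0,1))). split.
  pose proof (n1_ge0 (N (1,0))); pose proof (n1_ge0 (N (0,1))); lra.
  intro u. rewrite (lin_decomp N HN u).
  eapply Rle_trans; [apply n1_add|]. rewrite !n1_scale.
  assert (E : n1 u = Rabs (fst u) + Rabs (snd u)) by reflexivity. rewrite E. pose proof (Rabs_pos (fst u)); pose proof (Rabs_pos (snd u)).
  pose proof (n1_ge0 (N (1,0))); pose proof (n1_ge0 (N (0,1))). nra. Qed.

Lemma it_lin N : linear N -> forall i, linear (it N i).
Proof. intros [Ha Hs] i; induction i as [|i [IHa IHs]]; split; intros; simpl; auto.
  rewrite IHa; auto. rewrite IHs; auto. Qed.

Lemma it_comm N i u : it N i (N u) = N (it N i u).
Proof. induction i; simpl; congruence. Qed.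
Lemma cv_of_comp s a b : Un_cv (fun n => fst (s n)) a -> Un_cv (fun n => snd (s n)) b -> cv s (a,b).
Proof. intros H1 H2 eps He.
  destruct (H1 (eps/2)) as [N1 HN1]; [lra|]. destruct (H2 (eps/2)) as [N2 HN2]; [lra|].
  exists (Nat.max N1 N2). intros n Hn. unfold n1, vsub; simpl.
  specialize (HN1 n ltac:(lia)); specialize (HN2 n ltac:(lia)). unfold R_dist in *. lra. Qed.

Lemma comp_of_cv s x : cv s x -> Un_cv (fun n => fst (s n)) (fst x) /\ Un_cv (fun n => snd (s n)) (snd x).
Proof. intros H; split; intros eps He; destruct (H eps He) as [N HN]; exists N; intros n Hn;
  specialize (HN n Hn); unfold n1, vsub in HN; simpl in HN; unfold R_dist;
  pose proof (Rabs_pos (fst (s n) - fst x)); pose proof (Rabs_pos (snd (s n) - snd x)); lra. Qed.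

Lemma cv_unique s x y : cv s x -> cv s y -> x = y.
Proof. intros Hx Hy. apply n1_zero_eq. apply Rnot_lt_le; intro Hp.
  destruct (Hx _ (ltac:(lra) : 0 < n1 (vsub x y) / 2)) as [N1 H1].
  destruct (Hy _ (ltac:(lra) : 0 < n1 (vsub x y) / 2)) as [N2 H2].
  specialize (H1 (Nat.max N1 N2) ltac:(lia)); specialize (H2 (Nat.max N1 N2) ltac:(lia)).
  pose proof (n1_sub_tri x (s (Nat.max N1 N2)) y). rewrite (n1_sub_sym x (s _)) in H. lra. Qed.

Lemma cv_shift s x : cv s x -> cv (fun n => s (S n)) x.
Proof. intros H eps He; destruct (H eps He) as [N HN]; exists N; intros; apply HN; lia. Qed.

Lemma cv_unshift s x : cv (fun n => s (S n)) x -> cv s x.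
Proof. intros H eps He; destruct (H eps He) as [N HN]; exists (S N); intros n Hn.
  destruct n; [lia|]. apply HN; lia. Qed.

Lemma cv_ext s t x : (forall n, s n = t n) -> cv s x -> cv t x.
Proof. intros E H eps He; destruct (H eps He) as [N HN]; exists N; intros; rewrite <- E; auto. Qed.

Lemma cv_lin N s x : linear N -> cv s x -> cv (fun n => N (s n)) (N x).
Proof. intros HN H eps He. destruct (lin_bound N HN) as [C [HC HCb]].
  destruct (H (eps / (C + 1))) as [M HM]. apply Rdiv_lt_0_compat; lra.
  exists M; intros n Hn. rewrite <- lin_sub by auto. eapply Rle_lt_trans; [apply HCb|].
  specialize (HM n Hn). apply Rle_lt_trans with ((C+1) * n1 (vsub (s n) x)).
  pose proof (n1_ge0 (vsub (s n) x)); nra.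
  apply Rmult_lt_compat_l with (r := C + 1) in HM; [|lra].
  replace ((C + 1) * (eps / (C + 1))) with eps in HM by (field; lra). lra. Qed.

Lemma cv_sub s t x y : cv s x -> cv t y -> cv (fun n => vsub (s n) (t n)) (vsub x y).
Proof. intros Hs Ht eps He.
  destruct (Hs (eps/2)) as [N1 H1]; [lra|]. destruct (Ht (eps/2)) as [N2 H2]; [lra|].
  exists (Nat.max N1 N2); intros n Hn. specialize (H1 n ltac:(lia)); specialize (H2 n ltac:(lia)).
  unfold n1, vsub in *; simpl in *.
  pose proof (Rabs_triang (fst (s n) - fst x) (-(fst (t n) - fst y))).
  pose proof (Rabs_triang (snd (s n) - snd x) (-(snd (t n) - snd y))).
  rewrite Rabs_Ropp in H, H0.
  replace (fst (s n) - fst (t n) - (fst x - fst y)) with (fst (s n) - fst x + - (fst (t n) - fst y)) by ring.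
  replace (snd (s n) - snd (t n) - (snd x - snd y)) with (snd (s n) - snd x + - (snd (t n) - snd y)) by ring.
  lra. Qed.

Lemma PS_ext N d1 d2 n : (forall i, (1 <= i <= n)%nat -> d1 i = d2 i) -> PS N d1 n = PS N d2 n.
Proof. induction n; intros H; simpl; auto. rewrite IHn by (intros; apply H; lia).
  rewrite H by lia. reflexivity. Qed.

Lemma tail_exact N K r dig Mb : contr N K r -> (forall i, n1 (dig i) <= Mb) ->
  forall n k, n1 (vsub (PS N dig (n + k)) (PS N dig n)) <= K * Mb * r ^ (S n) * (1 - r ^ k) / (1 - r).
Proof. intros [HK [Hr Hc]] HM n k. induction k.
  - rewrite Nat.add_0_r, n1_sub_self. simpl. unfold Rdiv. rewrite Rminus_diag. lra.
  - rewrite Nat.add_succ_r. simpl PS.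
    assert (E : vsub (vadd (PS N dig (n + k)) (N (it N (n + k) (dig (S (n + k)))))) (PS N dig n)
              = vadd (vsub (PS N dig (n + k)) (PS N dig n)) (it N (S (n+k)) (dig (S (n + k))))).
    { apply vec_eq; simpl; ring. }
    rewrite E. eapply Rle_trans; [apply n1_add|].
    pose proof (Hc (S (n + k)) (dig (S (n + k)))). pose proof (HM (S (n+k))).
    assert (r ^ S (n + k) = r ^ S n * r ^ k) by (simpl; rewrite pow_add; ring).
    assert (0 <= r ^ S n) by (apply pow_le; lra). assert (0 <= r ^ k) by (apply pow_le; lra).
    assert (K * r ^ S (n + k) * n1 (dig (S (n + k))) <= K * r ^ S (n+k) * Mb).
    { apply Rmult_le_compat_l. apply Rmult_le_pos; [lra|]. rewrite H1; apply Rmult_le_pos; assumption. lra. }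
    assert (K * Mb * r ^ S n * (1 - r ^ S k) / (1 - r) = K * Mb * r ^ S n * (1 - r ^ k) / (1 - r) + K * r ^ S (n+k) * Mb).
    { rewrite H1. simpl. field. lra. }
    lra. Qed.

Lemma tail_bound N K r dig Mb : contr N K r -> (forall i, n1 (dig i) <= Mb) ->
  forall n k, n1 (vsub (PS N dig (n + k)) (PS N dig n)) <= K * Mb * r ^ (S n) / (1 - r).
Proof. intros Hc HM n k. eapply Rle_trans; [apply (tail_exact N K r dig Mb Hc HM)|].
  destruct Hc as [HK [Hr _]]. assert (0 <= Mb) by (pose proof (HM O); pose proof (n1_ge0 (dig O)); lra).
  assert (0 <= r ^ S n) by (apply pow_le; lra). assert (0 <= r ^ k) by (apply pow_le; lra).
  unfold Rdiv. apply Rmult_le_compat_r. apply Rlt_le, Rinv_0_lt_compat; lra.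
  assert (0 <= K * Mb * r ^ S n) by (apply Rmult_le_pos; [apply Rmult_le_pos; lra| assumption]). nra. Qed.

Lemma small_pow r C eps : 0 < r < 1 -> 0 < eps -> exists J, forall n, (J <= n)%nat -> C * r ^ n < eps.
Proof. intros Hr He. destruct (pow_lt_1_zero r ltac:(rewrite Rabs_right; lra) (eps / (Rabs C + 1))) as [J HJ].
  apply Rdiv_lt_0_compat; [lra| pose proof (Rabs_pos C); lra].
  exists J; intros n Hn. specialize (HJ n Hn). rewrite Rabs_right in HJ by (apply Rle_ge, pow_le; lra).
  assert (0 <= r ^ n) by (apply pow_le; lra). pose proof (Rabs_pos C).
  apply Rle_lt_trans with (Rabs C * r ^ n). apply Rmult_le_compat_r; auto; apply Rle_abs.
  apply Rmult_lt_compat_l with (r := Rabs C + 1) in HJ; [|lra].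
  replace ((Rabs C + 1) * (eps / (Rabs C + 1))) with eps in HJ by (field; lra). nra. Qed.

Lemma pow_decr r m n : 0 <= r <= 1 -> (m <= n)%nat -> r ^ n <= r ^ m.
Proof. intros Hr Hmn. replace n with (m + (n - m))%nat by lia. generalize (n - m)%nat as k.
  induction k. rewrite Nat.add_0_r; lra.
  rewrite Nat.add_succ_r. simpl. assert (0 <= r ^ (m + k)) by (apply pow_le; lra). nra. Qed.

Lemma PS_conv N K r dig Mb : contr N K r -> (forall i, n1 (dig i) <= Mb) ->
  exists x, cv (PS N dig) x.
Proof. intros Hc HM.
  assert (Hcau : forall eps, 0 < eps -> exists J, forall n m, (J <= n)%nat -> (J <= m)%nat ->
     n1 (vsub (PS N dig m) (PS N dig n)) < eps).
  { intros eps He. destruct Hc as [HK [Hr Hcc]].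
    destruct (small_pow r (2 * (K * Mb * r / (1 - r))) eps Hr He) as [J HJ]. exists J. intros n m Hn Hm.
    assert (forall a b, (J <= a)%nat -> (a <= b)%nat -> n1 (vsub (PS N dig b) (PS N dig a)) <= K * Mb * r / (1 - r) * r ^ a).
    { intros a b Ha Hb. replace b with (a + (b - a))%nat by lia.
      eapply Rle_trans; [apply (tail_bound N K r dig Mb (conj HK (conj Hr Hcc)) HM)|]. simpl; right; field; lra. }
    specialize (HJ J (le_n _)).
    assert (r ^ n <= r ^ J) by (apply pow_decr; lra || lia).
    assert (r ^ m <= r ^ J) by (apply pow_decr; lra || lia).
    assert (0 <= K * Mb * r / (1 - r)).
    { assert (0 <= Mb) by (pose proof (HM O); pose proof (n1_ge0 (dig O)); lra).
      unfold Rdiv; repeat apply Rmult_le_pos; try lra. apply Rlt_le, Rinv_0_lt_compat; lra. }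
    destruct (le_ge_dec n m).
    - pose proof (H n m Hn l). nra.
    - rewrite n1_sub_sym. pose proof (H m n Hm g). nra. }
  assert (C1 : Cauchy_crit (fun n => fst (PS N dig n))).
  { intros eps He; destruct (Hcau eps He) as [J HJ]; exists J; intros n m Hn Hm.
    specialize (HJ m n Hm Hn). unfold R_dist, n1, vsub in *; simpl in *.
    pose proof (Rabs_pos (snd (PS N dig n) - snd (PS N dig m))); lra. }
  assert (C2 : Cauchy_crit (fun n => snd (PS N dig n))).
  { intros eps He; destruct (Hcau eps He) as [J HJ]; exists J; intros n m Hn Hm.
    specialize (HJ m n Hm Hn). unfold R_dist, n1, vsub in *; simpl in *.
    pose proof (Rabs_pos (fst (PS N dig n) - fst (PS N dig m))); lra. }
  destruct (R_complete _ C1) as [a Ha]. destruct (R_complete _ C2) as [b Hb].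
  exists (a, b). apply cv_of_comp; auto. Qed.

Lemma le_eps a b : (forall eps, 0 < eps -> a <= b + eps) -> a <= b.
Proof. intros H. apply Rnot_lt_le; intro. specialize (H ((a - b)/2) ltac:(lra)). lra. Qed.

Lemma lim_tail N K r dig Mb x : contr N K r -> (forall i, n1 (dig i) <= Mb) -> cv (PS N dig) x ->
  forall n, n1 (vsub x (PS N dig n)) <= K * Mb * r ^ (S n) / (1 - r).
Proof. intros Hc HM Hx n. apply le_eps; intros eps He.
  destruct (Hx eps He) as [J HJ]. specialize (HJ (n + J)%nat ltac:(lia)).
  pose proof (tail_bound N K r dig Mb Hc HM n J).
  pose proof (n1_sub_tri x (PS N dig (n + J)) (PS N dig n)). rewrite (n1_sub_sym (PS N dig (n+J))) in HJ. lra. Qed.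
Definition Dset (f : nat -> vec) (m : nat) (x : vec) : Prop := exists k, (k < m)%nat /\ x = f k.

Lemma Dset_bound f m : exists Mb, forall x, Dset f m x -> n1 x <= Mb.
Proof. induction m.
  - exists 0. intros x [k [Hk _]]; lia.
  - destruct IHm as [M HM]. exists (Rmax M (n1 (f m))). intros x [k [Hk ->]].
    destruct (Nat.eq_dec k m). subst; apply Rmax_r.
    eapply Rle_trans; [apply HM; exists k; split; [lia|reflexivity]| apply Rmax_l]. Qed.

Lemma cv_addl c s x : cv s x -> cv (fun n => vadd c (s n)) (vadd c x).
Proof. intros H eps He; destruct (H eps He) as [J HJ]; exists J; intros n Hn.
  replace (vsub (vadd c (s n)) (vadd c x)) with (vsub (s n) x) by (apply vec_eq; simpl; ring). auto. Qed.

Lemma PS_shift N dig n : linear N ->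
  PS N dig (S n) = N (vadd (dig 1%nat) (PS N (fun i => dig (S i)) n)).
Proof. intros HN. pose proof HN as [Ha Hs]. induction n.
  - simpl. replace (vadd (dig 1%nat) vzero) with (dig 1%nat) by (apply vec_eq; simpl; ring).
    apply vec_eq; simpl; ring.
  - change (PS N dig (S (S n))) with (vadd (PS N dig (S n)) (N (it N (S n) (dig (S (S n)))))).
    rewrite IHn. simpl PS. rewrite !Ha. apply vec_eq; simpl; ring. Qed.

Lemma shift_lem N K r f m dig x : linear N -> contr N K r -> (forall i, Dset f m (dig i)) ->
  cv (PS N dig) x -> exists z, cv (PS N (fun i => dig (S i))) z /\ x = N (vadd (dig 1%nat) z).
Proof. intros HN Hc Hd Hx. destruct (Dset_bound f m) as [Mb HMb].
  destruct (PS_conv N K r (fun i => dig (S i)) Mb Hc) as [z Hz]. intros; apply HMb, Hd.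
  exists z; split; auto. apply (cv_unique (fun n => PS N dig (S n))). apply cv_shift; auto.
  apply cv_ext with (fun n => N (vadd (dig 1%nat) (PS N (fun i => dig (S i)) n))).
  intros; rewrite PS_shift; auto. apply cv_lin; auto. apply cv_addl; auto. Qed.

Definition prep (d : vec) (dig : nat -> vec) (i : nat) : vec :=
  match i with O => d | S O => d | S j => dig j end.

Lemma prepend_lem N K r f m dig y d : linear N -> contr N K r -> (forall i, Dset f m (dig i)) ->
  cv (PS N dig) y -> Dset f m d -> Tset N (fun _ => Dset f m) (N (vadd d y)).
Proof. intros HN Hc Hd Hy Hdd. exists (prep d dig). split.
  - intros [|[|i]]; simpl; auto.
  - apply cv_unshift. apply cv_ext with (fun n => N (vadd d (PS N dig n))).
    + intros n. rewrite PS_shift; auto. f_equal. f_equal. apply PS_ext.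
      intros [|i] Hi; [lia|]. reflexivity.
    + apply cv_lin; auto. apply cv_addl; auto. Qed.
Definition upd (e : nat -> vec) (p : nat) (x : vec) : nat -> vec :=
  fun i => if Nat.eqb i p then x else e i.

Fixpoint Gseq (pick : nat -> (nat -> vec) -> vec) (e0 : nat -> vec) (j : nat) : nat -> vec :=
  match j with O => e0 | S j' => upd (Gseq pick e0 j') (S j') (pick j' (Gseq pick e0 j')) end.

Definition agree (dg : nat -> nat -> vec) (j : nat) (e : nat -> vec) (n : nat) : Prop :=
  forall i, (1 <= i <= j)%nat -> dg n i = e i.
Definition Inf (dg : nat -> nat -> vec) (j : nat) (e : nat -> vec) : Prop :=
  forall n0, exists n, (n0 <= n)%nat /\ agree dg j e n.

Lemma Gseq_stable pick e0 j i : (i <= j)%nat -> Gseq pick e0 j i = Gseq pick e0 i i.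
Proof. induction j; intros H.
  - replace i with O by lia; reflexivity.
  - destruct (Nat.eq_dec i (S j)). subst; reflexivity.
    simpl. unfold upd. replace (Nat.eqb i (S j)) with false by (symmetry; apply Nat.eqb_neq; auto).
    apply IHj; lia. Qed.

Lemma fin_max (P : nat -> nat -> Prop) m :
  (forall k, (k < m)%nat -> exists n0, forall n, (n0 <= n)%nat -> P k n) ->
  exists n0, forall k, (k < m)%nat -> forall n, (n0 <= n)%nat -> P k n.
Proof. induction m; intros H.
  - exists O; intros; lia.
  - destruct IHm as [N1 H1]. intros; apply H; lia. destruct (H m ltac:(lia)) as [N2 H2].
    exists (Nat.max N1 N2). intros k Hk n Hn. destruct (Nat.eq_dec k m). subst; apply H2; lia.
    apply H1; lia. Qed.

Lemma pigeon dg f m j e : (forall n i, Dset f m (dg n i)) -> Inf dg j e ->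
  exists x, Inf dg (S j) (upd e (S j) x).
Proof. intros Hd HI. apply NNPP; intro Hn.
  assert (H : forall k, (k < m)%nat -> exists n0, forall n, (n0 <= n)%nat -> ~ agree dg (S j) (upd e (S j) (f k)) n).
  { intros k Hk. apply NNPP; intro H1. apply Hn. exists (f k). intros n0. apply NNPP; intro H2.
    apply H1. exists n0. intros n Hn0 Ha. apply H2. exists n; split; auto. }
  destruct (fin_max _ m H) as [N0 HN0]. destruct (HI N0) as [n [Hn0 Ha]].
  destruct (Hd n (S j)) as [k [Hk Hdk]]. apply (HN0 k Hk n Hn0).
  intros i Hi. unfold upd. destruct (Nat.eq_dec i (S j)).
  - subst. rewrite Nat.eqb_refl. auto.
  - replace (Nat.eqb i (S j)) with false by (symmetry; apply Nat.eqb_neq; auto). apply Ha; lia. Qed.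

Lemma cluster N K r f m (Dig : nat -> vec -> Prop) (a : nat -> vec) :
  linear N -> contr N K r -> (forall i x, Dig i x -> Dset f m x) -> (forall n, Tset N Dig (a n)) ->
  exists z, Tset N Dig z /\ forall eps, 0 < eps -> forall n0, exists n, (n0 <= n)%nat /\ n1 (vsub (a n) z) < eps.
Proof. intros HN Hc HD Ha.
  pose (dg := fun n => proj1_sig (constructive_indefinite_description _ (Ha n))).
  assert (Hdg : forall n, (forall i, Dig i (dg n i)) /\ cv (PS N (dg n)) (a n)).
  { intros n. exact (proj2_sig (constructive_indefinite_description _ (Ha n))). }
  assert (HdD : forall n i, Dset f m (dg n i)). { intros n i; apply (HD i), (proj1 (Hdg n)). }
  pose (pick := fun j e => epsilon (inhabits vzero) (fun x => Inf dg (S j) (upd e (S j) x))).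
  pose (G := Gseq pick (dg O)).
  assert (HG : forall j, Inf dg j (G j)).
  { induction j.
    - intros n0; exists n0; split; [lia|]. intros i Hi; lia.
    - simpl. apply (epsilon_spec (inhabits vzero) (fun x => Inf dg (S j) (upd (G j) (S j) x))).
      apply (pigeon dg f m); auto. }
  pose (e := fun i => G i i).
  assert (He : forall j, Inf dg j e).
  { intros j n0. destruct (HG j n0) as [n [Hn Hag]]. exists n; split; auto.
    intros i Hi. unfold e. rewrite Hag by auto. apply Gseq_stable; lia. }
  assert (Hev : forall i, Dig i (e i)).
  { intros [|i]. unfold e; simpl. apply (proj1 (Hdg O)).
    destruct (He (S i) O) as [n [_ Hag]]. rewrite <- (Hag (S i)) by lia. apply (proj1 (Hdg n)). }
  destruct (Dset_bound f m) as [Mb HMb].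
  assert (HeB : forall i, n1 (e i) <= Mb) by (intros; apply HMb, (HD i), Hev).
  destruct (PS_conv N K r e Mb Hc HeB) as [z Hz].
  exists z; split. exists e; split; auto.
  intros eps Heps n0. destruct Hc as [HK [Hr Hcc]].
  destruct (small_pow r (2 * (K * Mb * r / (1 - r))) eps Hr Heps) as [J HJ].
  specialize (HJ J (le_n _)).
  destruct (He J n0) as [n [Hn Hag]]. exists n; split; auto.
  assert (E : PS N (dg n) J = PS N e J) by (apply PS_ext; intros; apply Hag; lia).
  pose proof (lim_tail N K r e Mb z (conj HK (conj Hr Hcc)) HeB Hz J).
  pose proof (lim_tail N K r (dg n) Mb (a n) (conj HK (conj Hr Hcc)) (fun i => HMb _ (HdD n i)) (proj2 (Hdg n)) J).
  rewrite E in H0. pose proof (n1_sub_tri (a n) (PS N e J) z). rewrite (n1_sub_sym (PS N e J) z) in H1.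
  assert (K * Mb * r ^ S J / (1 - r) = K * Mb * r / (1 - r) * r ^ J) by (simpl; field; lra).
  lra. Qed.

Definition closedS (S : vec -> Prop) : Prop :=
  forall x, (forall eps, 0 < eps -> exists y, S y /\ n1 (vsub x y) < eps) -> S x.

Lemma Tset_closed N K r f m Dig : linear N -> contr N K r -> (forall i x, Dig i x -> Dset f m x) ->
  closedS (Tset N Dig).
Proof. intros HN Hc HD x Hx.
  assert (Ha : forall n, exists y, Tset N Dig y /\ n1 (vsub x y) < / INR (S n)).
  { intros n; apply Hx. apply Rinv_0_lt_compat, lt_0_INR; lia. }
  pose (a := fun n => proj1_sig (constructive_indefinite_description _ (Ha n))).
  assert (Ha2 : forall n, Tset N Dig (a n) /\ n1 (vsub x (a n)) < / INR (S n)).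
  { intros n; exact (proj2_sig (constructive_indefinite_description _ (Ha n))). }
  destruct (cluster N K r f m Dig a HN Hc HD (fun n => proj1 (Ha2 n))) as [z [Hz Hcl]].
  replace x with z; auto. symmetry. apply n1_zero_eq. apply le_eps; intros eps He.
  destruct (archimed_cor1 (eps/2) ltac:(lra)) as [n0 [Hn0 Hn0p]].
  destruct (Hcl (eps/2) ltac:(lra) n0) as [n [Hn Hn2]].
  pose proof (proj2 (Ha2 n)).
  assert (/ INR (S n) <= / INR n0).
  { apply Rinv_le_contravar. apply lt_0_INR; lia. apply le_INR; lia. }
  pose proof (n1_sub_tri x (a n) z). lra. Qed.
Lemma vdist_le_n1 x y : vdist x y <= n1 (vsub x y).
Proof. unfold vdist, n1, vsub; cbn [fst snd]. set (a := fst x - fst y); set (b := snd x - snd y).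
  rewrite <- (sqrt_pow2 (Rabs a + Rabs b)) by (pose proof (Rabs_pos a); pose proof (Rabs_pos b); lra).
  apply sqrt_le_1_alt. rewrite <- (pow2_abs a), <- (pow2_abs b).
  pose proof (Rabs_pos a); pose proof (Rabs_pos b). nra. Qed.

Lemma abs_le_sqrt a b : Rabs a <= sqrt (a ^ 2 + b ^ 2).
Proof. rewrite <- sqrt_Rsqr_abs. apply sqrt_le_1_alt. unfold Rsqr. nra. Qed.

Lemma n1_le_vdist x y : n1 (vsub x y) <= 2 * vdist x y.
Proof. unfold vdist, n1, vsub; cbn [fst snd]. pose proof (abs_le_sqrt (fst x - fst y) (snd x - snd y)).
  pose proof (abs_le_sqrt (snd x - snd y) (fst x - fst y)).
  rewrite Rplus_comm in H0. lra. Qed.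

Definition away (S : vec -> Prop) (x : vec) : Prop :=
  exists eps, 0 < eps /\ forall y, S y -> eps <= n1 (vsub x y).

Lemma away_open S : open2 (away S).
Proof. intros x [eps [He H]]. exists (eps / 2); split; [lra|]. intros y' Hy'.
  exists (eps - 2 * vdist x y'). split. lra. intros y Hy. specialize (H y Hy).
  pose proof (n1_sub_tri x y' y). pose proof (n1_le_vdist x y'). lra. Qed.

Lemma away_not S x : away S x -> ~ S x.
Proof. intros [eps [He H]] Hx. specialize (H x Hx). rewrite n1_sub_self in H. lra. Qed.

Lemma closed_away S x : closedS S -> ~ S x -> away S x.
Proof. intros Hc Hn. apply NNPP; intro Ha. apply Hn, Hc. intros eps He. apply NNPP; intro H.
  apply Ha. exists eps; split; auto. intros y Hy. apply Rnot_lt_le. intro Hl. apply H. exists y; auto. Qed.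

Definition Fs N f m := Tset N (fun _ => Dset f m).

Definition adj N f m k j := exists x y, Fs N f m x /\ Fs N f m y /\ vadd (f k) x = vadd (f j) y.

Lemma const_pt N K r f m k : contr N K r -> (k < m)%nat ->
  exists x, cv (PS N (fun _ => f k)) x.
Proof. intros Hc Hk. destruct (Dset_bound f m) as [Mb HMb].
  apply (PS_conv N K r _ Mb Hc). intros; apply HMb; exists k; auto. Qed.

Lemma stepA N K r f m : linear N -> contr N K r -> (forall u w, N u = N w -> u = w) ->
  connected2 (Fs N f m) ->
  forall Pc : nat -> Prop, (forall k j, (k < m)%nat -> (j < m)%nat -> adj N f m k j -> (Pc k <-> Pc j)) ->
  forall k j, (k < m)%nat -> (j < m)%nat -> Pc k -> Pc j.
Proof. intros HN Hc Hinj Hconn Pc HPc k0 j0 Hk0 Hj0 Hp. apply NNPP; intro Hnp. apply Hconn.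
  set (Dig1 := fun i x => Dset f m x /\ (i = 1%nat -> exists k, (k < m)%nat /\ Pc k /\ x = f k)).
  set (Dig2 := fun i x => Dset f m x /\ (i = 1%nat -> exists k, (k < m)%nat /\ ~ Pc k /\ x = f k)).
  set (F1 := Tset N Dig1). set (F2 := Tset N Dig2).
  assert (C1 : closedS F1) by (apply (Tset_closed N K r f m); auto; intros i x H; apply H).
  assert (C2 : closedS F2) by (apply (Tset_closed N K r f m); auto; intros i x H; apply H).
  assert (S1 : forall x, F1 x -> Fs N f m x).
  { intros x [dig [Hd Hx]]. exists dig; split; auto. intros i; apply Hd. }
  assert (S2 : forall x, F2 x -> Fs N f m x).
  { intros x [dig [Hd Hx]]. exists dig; split; auto. intros i; apply Hd. }
  assert (Cov : forall x, Fs N f m x -> F1 x \/ F2 x).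
  { intros x [dig [Hd Hx]]. destruct (Hd 1%nat) as [k [Hk Ek]]. destruct (classic (Pc k)).
    - left. exists dig; split; auto. intros i; split; auto. intros ->. exists k; auto.
    - right. exists dig; split; auto. intros i; split; auto. intros ->. exists k; auto. }
  assert (Dis : forall x, F1 x -> F2 x -> False).
  { intros x [d1 [Hd1 Hx1]] [d2 [Hd2 Hx2]].
    destruct (shift_lem N K r f m d1 x HN Hc (fun i => proj1 (Hd1 i)) Hx1) as [z1 [Hz1 E1]].
    destruct (shift_lem N K r f m d2 x HN Hc (fun i => proj1 (Hd2 i)) Hx2) as [z2 [Hz2 E2]].
    destruct (proj2 (Hd1 1%nat) eq_refl) as [k1 [Hk1 [P1 Q1]]].
    destruct (proj2 (Hd2 1%nat) eq_refl) as [k2 [Hk2 [P2 Q2]]].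
    apply P2. apply (HPc k1 k2 Hk1 Hk2); auto.
    exists z1, z2. split; [exists (fun i => d1 (S i)); split; auto; intros i; apply Hd1|].
    split; [exists (fun i => d2 (S i)); split; auto; intros i; apply Hd2|].
    rewrite <- Q1, <- Q2. apply Hinj. congruence. }
  destruct (const_pt N K r f m k0 Hc Hk0) as [p1 Hp1].
  destruct (const_pt N K r f m j0 Hc Hj0) as [p2 Hp2].
  assert (P1 : F1 p1). { exists (fun _ => f k0); split; auto. intros i; split. exists k0; auto. intros; exists k0; auto. }
  assert (P2 : F2 p2). { exists (fun _ => f j0); split; auto. intros i; split. exists j0; auto. intros; exists j0; auto. }
  exists (away F2), (away F1). split; [apply away_open|]. split; [apply away_open|].
  split. { intros x Hx. destruct (Cov x Hx) as [H|H]; [left|right]; apply closed_away; auto;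
           intro H'; apply (Dis x); auto. }
  split. { exists p1; split; auto. apply closed_away; auto. intro; apply (Dis p1); auto. }
  split. { exists p2; split; auto. apply closed_away; auto. intro; apply (Dis p2); auto. }
  intros x Hx HU HV. destruct (Cov x Hx) as [H|H]. apply (away_not F1 x); auto. apply (away_not F2 x); auto.
Qed.
Lemma pow_m1 i : (-1) ^ i = if Nat.even i then 1 else -1.
Proof. induction i. reflexivity. rewrite Nat.even_succ, <- Nat.negb_even. simpl pow. rewrite IHi.
  destruct (Nat.even i); simpl; ring. Qed.

Lemma Lit N N' L : linear L -> linear N' -> (forall u, L (N u) = vscale (-1) (N' (L u))) ->
  forall i u, L (it N i u) = vscale ((-1) ^ i) (it N' i (L u)).
Proof. intros HL HN' H i u. induction i.
  - simpl. apply vec_eq; simpl; ring.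
  - simpl. rewrite H, IHi, (proj2 HN'). apply vec_eq; simpl; ring. Qed.

Lemma eq_to_sub c d x y : vadd c x = vadd d y -> vsub x y = vsub d c.
Proof. intros H. pose proof (f_equal fst H); pose proof (f_equal snd H). simpl in *.
  apply vec_eq; simpl; lra. Qed.
Lemma sub_to_eq c d x y : vsub x y = vsub d c -> vadd c x = vadd d y.
Proof. intros H. pose proof (f_equal fst H); pose proof (f_equal snd H). simpl in *.
  apply vec_eq; simpl; lra. Qed.

Lemma PS_S N dig n : PS N dig (S n) = vadd (PS N dig n) (it N (S n) (dig (S n))).
Proof. reflexivity. Qed.

Lemma transfer N N' L K r K' r' f m : linear N -> linear N' -> linear L -> contr N K r -> contr N' K' r' ->
  (forall u, L (N u) = vscale (-1) (N' (L u))) ->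
  forall k j, adj N f m k j -> adj N' (fun i => L (f i)) m k j.
Proof. intros HN HN' HL Hc Hc' HLN k j [x [y [[a [Ha Hx]] [[b [Hb Hy]] E]]]].
  set (a' := fun i => if Nat.even i then L (a i) else L (b i)).
  set (b' := fun i => if Nat.even i then L (b i) else L (a i)).
  assert (Va : forall i, Dset (fun i => L (f i)) m (a' i)).
  { intros i. unfold a'. destruct (Nat.even i); [destruct (Ha i) as [kk [Hk ->]]| destruct (Hb i) as [kk [Hk ->]]];
    exists kk; auto. }
  assert (Vb : forall i, Dset (fun i => L (f i)) m (b' i)).
  { intros i. unfold b'. destruct (Nat.even i); [destruct (Hb i) as [kk [Hk ->]]| destruct (Ha i) as [kk [Hk ->]]];
    exists kk; auto. }
  destruct (Dset_bound (fun i => L (f i)) m) as [Mb HMb].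
  destruct (PS_conv N' K' r' a' Mb Hc' (fun i => HMb _ (Va i))) as [x' Hx'].
  destruct (PS_conv N' K' r' b' Mb Hc' (fun i => HMb _ (Vb i))) as [y' Hy'].
  exists x', y'. split; [exists a'; split; auto|]. split; [exists b'; split; auto|].
  assert (Term : forall i, vsub (it N' i (a' i)) (it N' i (b' i)) = L (vsub (it N i (a i)) (it N i (b i)))).
  { intros i. rewrite <- (lin_sub (it N i)) by (apply it_lin; auto).
    rewrite (Lit N N' L HL HN' HLN). rewrite <- (lin_sub (it N' i)) by (apply it_lin; auto).
    rewrite pow_m1. unfold a', b'. destruct (Nat.even i).
    - rewrite <- lin_sub by auto. apply vec_eq; simpl; ring.
    - replace (vsub (L (b i)) (L (a i))) with (vscale (-1) (L (vsub (a i) (b i)))).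
      rewrite (proj2 (it_lin N' HN' i)). reflexivity.
      rewrite lin_sub by auto. apply vec_eq; simpl; ring. }
  assert (Key : forall n, vsub (PS N' a' n) (PS N' b' n) = L (vsub (PS N a n) (PS N b n))).
  { induction n.
    - simpl. replace (vsub vzero vzero) with vzero by (apply vec_eq; simpl; ring). symmetry; apply lin_zero; auto.
    - rewrite !PS_S. replace (vsub (vadd (PS N a n) (it N (S n) (a (S n)))) (vadd (PS N b n) (it N (S n) (b (S n)))))
        with (vadd (vsub (PS N a n) (PS N b n)) (vsub (it N (S n) (a (S n))) (it N (S n) (b (S n)))))
        by (apply vec_eq; simpl; ring).
      rewrite (proj1 HL), <- IHn, <- Term. apply vec_eq; simpl; ring. }
  apply sub_to_eq. rewrite <- !lin_sub by auto.
  apply eq_to_sub in E. rewrite <- E.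
  apply (cv_unique (fun n => vsub (PS N' a' n) (PS N' b' n))). apply cv_sub; auto.
  apply cv_ext with (fun n => L (vsub (PS N a n) (PS N b n))). intros; symmetry; apply Key.
  apply cv_lin; auto. apply cv_sub; auto. Qed.
Fixpoint Sp (N : vec -> vec) (e : nat -> vec) (n : nat) (y : vec) : vec :=
  match n with O => y | S k => Sp N e k (N (vadd (e (S k)) y)) end.

Lemma Sp_ext N e1 e2 n y : (forall i, (1 <= i <= n)%nat -> e1 i = e2 i) -> Sp N e1 n y = Sp N e2 n y.
Proof. revert y; induction n; intros y H; simpl; auto. rewrite H by lia. apply IHn; intros; apply H; lia. Qed.

Lemma Sp_in N K r g m e n y : linear N -> contr N K r -> (forall i, Dset g m (e i)) ->
  Fs N g m y -> Fs N g m (Sp N e n y).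
Proof. intros HN Hc He. revert y; induction n; intros y Hy; simpl; auto. apply IHn.
  destruct Hy as [dig [Hd Hy]]. apply (prepend_lem N K r g m dig); auto. Qed.

Lemma Sp_diff N e n y1 y2 : linear N -> vsub (Sp N e n y1) (Sp N e n y2) = it N n (vsub y1 y2).
Proof. intros HN. revert y1 y2; induction n; intros; simpl; auto. rewrite IHn.
  rewrite <- it_comm. f_equal. rewrite <- lin_sub by auto. f_equal. apply vec_eq; simpl; ring. Qed.

Lemma n1_sub_le u w : n1 (vsub u w) <= n1 u + n1 w.
Proof. rewrite vsub_vadd. eapply Rle_trans; [apply n1_add|]. rewrite n1_scale. assert (Rabs (-1) = 1) by (rewrite Rabs_left; lra). rewrite H. lra. Qed.

Lemma stepB N K r g m : linear N -> contr N K r ->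
  (forall Pc : nat -> Prop, (forall k j, (k < m)%nat -> (j < m)%nat -> adj N g m k j -> (Pc k <-> Pc j)) ->
     forall k j, (k < m)%nat -> (j < m)%nat -> Pc k -> Pc j) ->
  connected2 (Fs N g m).
Proof. intros HN Hc GP [U [V [HU [HV [Hcov [[p [Hp HUp]] [[q [Hq HVq]] Hdis]]]]]]].
  set (F := Fs N g m) in *.
  destruct (Dset_bound g m) as [Mb HMb].
  assert (Bd : forall y, F y -> n1 y <= K * Mb * r / (1 - r)).
  { intros y [dig [Hd Hy]]. pose proof (lim_tail N K r dig Mb y Hc (fun i => HMb _ (Hd i)) Hy O).
    simpl in H. replace (vsub y vzero) with y in H by (apply vec_eq; simpl; ring). rewrite Rmult_1_r in H. exact H. }
  assert (Sep : exists delta, 0 < delta /\ forall a b, F a -> U a -> F b -> V b -> delta <= n1 (vsub a b)).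
  { apply NNPP; intro Hn.
    assert (Hab : forall n, exists ab : vec * vec, F (fst ab) /\ U (fst ab) /\ F (snd ab) /\ V (snd ab) /\
                  n1 (vsub (fst ab) (snd ab)) < / INR (S n)).
    { intros n. apply NNPP; intro H1. apply Hn. exists (/ INR (S n)); split.
      apply Rinv_0_lt_compat, lt_0_INR; lia.
      intros a b Ha HUa Hb HVb. apply Rnot_lt_le; intro Hl. apply H1. exists (a, b); simpl; auto. }
    pose (ab := fun n => proj1_sig (constructive_indefinite_description _ (Hab n))).
    assert (Hab2 : forall n, F (fst (ab n)) /\ U (fst (ab n)) /\ F (snd (ab n)) /\ V (snd (ab n)) /\
                  n1 (vsub (fst (ab n)) (snd (ab n))) < / INR (S n)).
    { intros n; exact (proj2_sig (constructive_indefinite_description _ (Hab n))). }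
    destruct (cluster N K r g m (fun _ => Dset g m) (fun n => fst (ab n)) HN Hc (fun _ x H => H)
       (fun n => proj1 (Hab2 n))) as [z [Hz Hcl]].
    destruct (Hcov z Hz) as [HUz | HVz].
    - destruct (HU z HUz) as [eps [He Hb]].
      destruct (archimed_cor1 (eps/2) ltac:(lra)) as [n0 [Hn0 Hn0p]].
      destruct (Hcl (eps/2) ltac:(lra) n0) as [n [Hnn Hn2]].
      destruct (Hab2 n) as [F1 [U1 [F2 [V2 D12]]]].
      assert (/ INR (S n) <= / INR n0) by (apply Rinv_le_contravar; [apply lt_0_INR; lia | apply le_INR; lia]).
      apply (Hdis (snd (ab n)) F2); auto. apply Hb.
      eapply Rle_lt_trans; [apply vdist_le_n1|].
      pose proof (n1_sub_tri z (fst (ab n)) (snd (ab n))). rewrite (n1_sub_sym z (fst (ab n))) in H0. lra.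
    - destruct (HV z HVz) as [eps [He Hb]].
      destruct (Hcl eps He O) as [n [_ Hn2]].
      destruct (Hab2 n) as [F1 [U1 [F2 [V2 D12]]]].
      apply (Hdis (fst (ab n)) F1); auto. apply Hb.
      eapply Rle_lt_trans; [apply vdist_le_n1|]. rewrite n1_sub_sym; auto. }
  destruct Sep as [delta [Hdel Hsep]].
  set (Mono := fun n => forall e, (forall i, Dset g m (e i)) -> forall y1 y2, F y1 -> F y2 ->
                 U (Sp N e n y1) -> U (Sp N e n y2)).
  assert (Big : exists n, Mono n).
  { destruct Hc as [HK [Hr Hcc]].
    destruct (small_pow r (K * (2 * (K * Mb * r / (1 - r)))) delta Hr Hdel) as [n Hn].
    exists n. intros e He y1 y2 Hy1 Hy2 HU1.
    assert (S1 : F (Sp N e n y1)) by (apply (Sp_in N K r); auto; split; auto).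
    assert (S2 : F (Sp N e n y2)) by (apply (Sp_in N K r); auto; split; auto).
    destruct (classic (U (Sp N e n y2))) as [H|H]; auto. exfalso.
    destruct (Hcov _ S2) as [H'|H']; [contradiction|].
    pose proof (Hsep _ _ S1 HU1 S2 H'). rewrite Sp_diff in H0 by auto.
    pose proof (Hcc n (vsub y1 y2)). pose proof (n1_sub_le y1 y2).
    pose proof (Bd y1 Hy1); pose proof (Bd y2 Hy2). specialize (Hn n (le_n _)).
    assert (0 <= K * r ^ n) by (apply Rmult_le_pos; [lra|apply pow_le; lra]).
    assert (K * r ^ n * n1 (vsub y1 y2) <= K * r ^ n * (2 * (K * Mb * r / (1 - r)))) by (apply Rmult_le_compat_l; lra).
    lra. }
  assert (Step : forall n, Mono (S n) -> Mono n).
  { intros n HM e He y1 y2 Hy1 Hy2 HU1.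
    assert (Eup : forall k z, Sp N (upd e (S n) (g k)) (S n) z = Sp N e n (N (vadd (g k) z))).
    { intros k z. simpl. unfold upd at 2. rewrite Nat.eqb_refl. apply Sp_ext.
      intros i Hi. unfold upd. replace (Nat.eqb i (S n)) with false by (symmetry; apply Nat.eqb_neq; lia). auto. }
    assert (Vup : forall k, (k < m)%nat -> forall i, Dset g m (upd e (S n) (g k) i)).
    { intros k Hk i. unfold upd. destruct (Nat.eqb i (S n)); auto. exists k; auto. }
    set (Pc := fun k => exists z, F z /\ U (Sp N e n (N (vadd (g k) z)))).
    assert (Tr : forall k j, (k < m)%nat -> adj N g m k j -> Pc k -> Pc j).
    { intros k j Hk [x' [y' [Hx' [Hy' E]]]] [z [Hz HUz]]. exists y'; split; auto.
      rewrite <- E. rewrite <- Eup. apply (HM _ (Vup k Hk) z x'); auto. rewrite Eup; auto. }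
    destruct Hy1 as [d1 [Hd1 Hc1]]. destruct Hy2 as [d2 [Hd2 Hc2]].
    destruct (shift_lem N K r g m d1 y1 HN Hc Hd1 Hc1) as [z1 [Hz1 E1]].
    destruct (shift_lem N K r g m d2 y2 HN Hc Hd2 Hc2) as [z2 [Hz2 E2]].
    destruct (Hd1 1%nat) as [k1 [Hk1 Ek1]]. destruct (Hd2 1%nat) as [k2 [Hk2 Ek2]].
    assert (Fz1 : F z1) by (exists (fun i => d1 (S i)); auto).
    assert (Fz2 : F z2) by (exists (fun i => d2 (S i)); auto).
    assert (P1 : Pc k1) by (exists z1; split; auto; rewrite <- Ek1, <- E1; auto).
    assert (P2 : Pc k2).
    { apply (GP Pc) with k1; auto. intros k j Hk Hj Ha; split; apply Tr; auto.
      destruct Ha as [x' [y' [A1 [A2 A3]]]]. exists y', x'; auto. }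
    destruct P2 as [z [Hz HUz]]. rewrite E2, Ek2, <- Eup. apply (HM _ (Vup k2 Hk2) z z2); auto.
    rewrite Eup; auto. }
  assert (Zero : Mono O).
  { destruct Big as [n Hn]. induction n; auto. }
  assert (Hp' := Hp). destruct Hp' as [e0 [He0 _]].
  apply (Hdis q Hq); auto. apply (Zero e0 He0 p q); auto.
Qed.
Definition Gf (c1 e1 c2 e2 a b : R) : R := (c1*a + e1*b)*(c1*a + e1*b) + (c2*a + e2*b)*(c2*a + e2*b).

Lemma growth (P Q : R) : (Q > 1 -> Q >= 2) ->
  (forall lr li, lr*lr - li*li + P*lr + Q = 0 -> 2*lr*li + P*li = 0 -> lr*lr + li*li > 1) ->
  exists c1 e1 c2 e2 rho, c1*e2 - c2*e1 <> 0 /\ 1 < rho /\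
    forall a b, rho * Gf c1 e1 c2 e2 a b <= Gf c1 e1 c2 e2 (-Q*b) (a - P*b).
Proof. intros HQ Hexp. set (D := P*P - 4*Q).
  destruct (Rtotal_order D 0) as [Hneg | [Hz | Hpos]].
  - set (s := sqrt (Q - P*P/4)).
    assert (Hs : s * s = Q - P*P/4) by (apply sqrt_sqrt; unfold D in Hneg; lra).
    assert (Hs0 : 0 < s) by (apply sqrt_lt_R0; unfold D in Hneg; lra).
    assert (HQ1 : Q > 1).
    { specialize (Hexp (-P/2) s). replace (-P/2 * (-P/2) + s*s) with Q in Hexp by (rewrite Hs; field).
      apply Hexp. rewrite Hs; field. field. }
    exists 1, (-P/2), 0, s, Q. split. lra. split. lra.
    intros a b. unfold Gf. right.
    replace ((0 * (-Q*b) + s * (a - P*b)) * (0 * (-Q*b) + s * (a - P*b))) with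
      (s * s * ((a - P*b) * (a - P*b))) by ring.
    replace ((0 * a + s * b) * (0 * a + s * b)) with (s * s * (b * b)) by ring.
    rewrite Hs. field.
  - set (l := -P/2).
    assert (HQl : Q = l * l) by (unfold l, D in *; nra).
    assert (Hl : l * l > 1).
    { pose proof (Hexp l 0). assert (l*l - 0*0 + P*l + Q = 0) by (rewrite HQl; unfold l; field). assert (2*l*0 + P*0 = 0) by ring. specialize (H H0 H1). lra. }
    assert (HL2 : l * l >= 2) by (rewrite <- HQl; apply HQ; lra).
    exists 1, l, 0, (1/4), (3/2). split. lra. split. lra.
    intros a b. unfold Gf.
    replace (1 * (-Q*b) + l * (a - P*b)) with (l * (1*a + l*b)) by (rewrite HQl; unfold l; field).
    replace (0 * (-Q*b) + 1/4 * (a - P*b)) with (1/4 * (1*a + l*b) + l * (0 * a + 1/4 * b)) by (unfold l; field).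
    set (g1 := 1 * a + l * b). set (g2 := 0 * a + 1/4 * b). clearbody g1 g2.
    assert (0 <= (l*g1 + g2)*(l*g1 + g2)) by (pose proof (Rle_0_sqr (l*g1+g2)); unfold Rsqr in *; lra).
    assert (0 <= (l*l - 2) * (g1*g1)) by (apply Rmult_le_pos; nra).
    assert (0 <= (l*l - 2) * (g2*g2)) by (apply Rmult_le_pos; nra).
    nra.
  - set (s := sqrt D). assert (Hs : s * s = D) by (apply sqrt_sqrt; lra).
    assert (Hs0 : 0 < s) by (apply sqrt_lt_R0; lra).
    set (l := (-P + s)/2). set (u := (-P - s)/2).
    assert (Rl : l*l + P*l + Q = 0) by (unfold l; unfold D in Hs; nra).
    assert (Ru : u*u + P*u + Q = 0) by (unfold u; unfold D in Hs; nra).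
    assert (Hl : l*l > 1) by (pose proof (Hexp l 0); nra).
    assert (Hu : u*u > 1) by (pose proof (Hexp u 0); nra).
    exists 1, l, 1, u, (Rmin (l*l) (u*u)). split. unfold l, u; lra. split.
    apply Rmin_glb_lt; lra.
    intros a b. unfold Gf.
    replace (1 * (-Q*b) + l * (a - P*b)) with (l * (1*a + l*b)) by nra.
    replace (1 * (-Q*b) + u * (a - P*b)) with (u * (1*a + u*b)) by nra.
    set (g1 := 1*a + l*b). set (g2 := 1*a + u*b). clearbody g1 g2.
    pose proof (Rmin_l (l*l) (u*u)). pose proof (Rmin_r (l*l) (u*u)).
    assert (0 <= g1*g1) by nra. assert (0 <= g2*g2) by nra.
    assert (Rmin (l*l) (u*u) * (g1*g1) <= l*l*(g1*g1)) by (apply Rmult_le_compat_r; auto).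
    assert (Rmin (l*l) (u*u) * (g2*g2) <= u*u*(g2*g2)) by (apply Rmult_le_compat_r; auto).
    nra.
Qed.
Lemma sq_sum_le x y : (x + y) * (x + y) <= 2 * (x*x + y*y).
Proof. pose proof (Rle_0_sqr (x - y)); unfold Rsqr in *; lra. Qed.

Lemma form_upper c1 e1 c2 e2 a b : Gf c1 e1 c2 e2 a b <= 2 * (c1*c1+e1*e1+c2*c2+e2*e2) * (a*a + b*b).
Proof. unfold Gf. pose proof (sq_sum_le (c1*a) (e1*b)). pose proof (sq_sum_le (c2*a) (e2*b)).
  assert (0 <= c1*c1*(b*b)) by (apply Rmult_le_pos; apply Rle_0_sqr).
  assert (0 <= e1*e1*(a*a)) by (apply Rmult_le_pos; apply Rle_0_sqr).
  assert (0 <= c2*c2*(b*b)) by (apply Rmult_le_pos; apply Rle_0_sqr).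
  assert (0 <= e2*e2*(a*a)) by (apply Rmult_le_pos; apply Rle_0_sqr).
  nra. Qed.

Lemma form_lower c1 e1 c2 e2 a b : c1*e2 - c2*e1 <> 0 ->
  a*a + b*b <= 4 * (c1*c1+e1*e1+c2*c2+e2*e2) / ((c1*e2 - c2*e1)*(c1*e2 - c2*e1)) * Gf c1 e1 c2 e2 a b.
Proof. intros HD. set (D := c1*e2 - c2*e1) in *. set (g1 := c1*a + e1*b). set (g2 := c2*a + e2*b).
  assert (Ea : D * a = e2 * g1 - e1 * g2) by (unfold D, g1, g2; ring).
  assert (Eb : D * b = c1 * g2 - c2 * g1) by (unfold D, g1, g2; ring).
  assert (Gf c1 e1 c2 e2 a b = g1*g1 + g2*g2) by reflexivity. rewrite H. clearbody g1 g2.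
  pose proof (sq_sum_le (e2*g1) (-(e1*g2))). pose proof (sq_sum_le (c1*g2) (-(c2*g1))).
  assert (DD : 0 < D*D) by (pose proof (Rsqr_pos_lt D HD) as HH; unfold Rsqr in HH; exact HH).
  assert ((a*a+b*b) * (D*D) <= 4 * (c1*c1+e1*e1+c2*c2+e2*e2) * (g1*g1 + g2*g2)).
  { replace ((a*a+b*b)*(D*D)) with ((D*a)*(D*a) + (D*b)*(D*b)) by ring. rewrite Ea, Eb.
    assert (0 <= c1*c1*(g1*g1)) by (apply Rmult_le_pos; apply Rle_0_sqr).
    assert (0 <= e1*e1*(g1*g1)) by (apply Rmult_le_pos; apply Rle_0_sqr).
    assert (0 <= c2*c2*(g2*g2)) by (apply Rmult_le_pos; apply Rle_0_sqr).
    assert (0 <= e2*e2*(g2*g2)) by (apply Rmult_le_pos; apply Rle_0_sqr).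
    assert (0 <= c1*c1*(g1*g1)) by (apply Rmult_le_pos; apply Rle_0_sqr).
    assert (0 <= e1*e1*(g2*g2)) by (apply Rmult_le_pos; apply Rle_0_sqr).
    assert (0 <= c2*c2*(g1*g1)) by (apply Rmult_le_pos; apply Rle_0_sqr).
    assert (0 <= e2*e2*(g1*g1)) by (apply Rmult_le_pos; apply Rle_0_sqr).
    assert (0 <= c1*c1*(g2*g2)) by (apply Rmult_le_pos; apply Rle_0_sqr).
    nra. }
  apply Rmult_le_reg_r with (D*D); auto. unfold Rdiv. 
  replace (4 * (c1 * c1 + e1 * e1 + c2 * c2 + e2 * e2) * / (D * D) * (g1 * g1 + g2 * g2) * (D * D))
    with (4 * (c1 * c1 + e1 * e1 + c2 * c2 + e2 * e2) * (g1 * g1 + g2 * g2)) by (field; lra). auto. Qed.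
Lemma abs_lin x1 x2 u : Rabs (x1 * fst u + x2 * snd u) <= (Rabs x1 + Rabs x2) * n1 u.
Proof. unfold n1. eapply Rle_trans; [apply Rabs_triang|]. rewrite !Rabs_mult.
  pose proof (Rabs_pos x1); pose proof (Rabs_pos x2); pose proof (Rabs_pos (fst u)); pose proof (Rabs_pos (snd u)). nra. Qed.

Lemma sq_le_abs a b : Rabs a <= b -> a * a <= b * b.
Proof. intros H. assert (a * a = Rabs a * Rabs a) by (rewrite <- Rabs_mult; rewrite Rabs_right; [ring| apply Rle_ge, Rle_0_sqr]).
  rewrite H0. pose proof (Rabs_pos a). nra. Qed.

Lemma contr_gen (N M : vec -> vec) (x1 x2 y1 y2 v1 v2 a1 a2 c1 e1 c2 e2 rho : R) :
  c1*e2 - c2*e1 <> 0 -> 1 < rho -> (forall u, M (N u) = u) ->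
  (forall u, rho * Gf c1 e1 c2 e2 (x1 * fst u + x2 * snd u) (y1 * fst u + y2 * snd u) <=
             Gf c1 e1 c2 e2 (x1 * fst (M u) + x2 * snd (M u)) (y1 * fst (M u) + y2 * snd (M u))) ->
  (forall u, fst u = (x1 * fst u + x2 * snd u) * v1 + (y1 * fst u + y2 * snd u) * a1 /\
             snd u = (x1 * fst u + x2 * snd u) * v2 + (y1 * fst u + y2 * snd u) * a2) ->
  exists K r, contr N K r.
Proof. intros HD Hrho HMN Hgr Hrec.
  set (al := fun u : vec => x1 * fst u + x2 * snd u). set (be := fun u : vec => y1 * fst u + y2 * snd u).
  set (G := fun u => Gf c1 e1 c2 e2 (al u) (be u)).
  assert (G0 : forall u, 0 <= G u).
  { intros u; unfold G, Gf. pose proof (Rle_0_sqr (c1 * al u + e1 * be u)); pose proof (Rle_0_sqr (c2 * al u + e2 * be u)).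
    unfold Rsqr in *; lra. }
  assert (H1 : forall u, G (N u) <= / rho * G u).
  { intros u. pose proof (Hgr (N u)). rewrite HMN in H. fold al be in H. unfold G.
    apply Rmult_le_reg_l with rho. lra. rewrite <- Rmult_assoc, Rinv_r, Rmult_1_l by lra. exact H. }
  assert (H2 : forall n u, G (it N n u) <= (/ rho) ^ n * G u).
  { induction n; intros u. simpl; lra. simpl it. eapply Rle_trans; [apply H1|]. simpl pow.
    rewrite Rmult_assoc. apply Rmult_le_compat_l. apply Rlt_le, Rinv_0_lt_compat; lra. auto. }
  set (S := c1*c1+e1*e1+c2*c2+e2*e2). set (D := c1*e2 - c2*e1) in *.
  set (Cv := Rabs v1 + Rabs a1 + Rabs v2 + Rabs a2).
  set (Ca := Rabs x1 + Rabs x2 + Rabs y1 + Rabs y2).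
  assert (S0 : 0 <= S) by (unfold S; pose proof (Rle_0_sqr c1); pose proof (Rle_0_sqr e1); pose proof (Rle_0_sqr c2); pose proof (Rle_0_sqr e2); unfold Rsqr in *; lra).
  assert (DD : 0 < D*D) by (pose proof (Rsqr_pos_lt D HD) as HH; unfold Rsqr in HH; exact HH).
  assert (Lw : forall w, n1 w * n1 w <= 2 * (Cv * Cv) * (al w * al w + be w * be w)).
  { intros w. destruct (Hrec w) as [E1 E2].
    assert (n1 w <= Cv * (Rabs (al w) + Rabs (be w))).
    { assert (F1 : fst w = al w * v1 + be w * a1) by exact E1.
      assert (F2 : snd w = al w * v2 + be w * a2) by exact E2.
      unfold n1. rewrite F1, F2.
      pose proof (Rabs_triang (al w * v1) (be w * a1)). pose proof (Rabs_triang (al w * v2) (be w * a2)).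
      rewrite !Rabs_mult in *. unfold Cv.
      pose proof (Rabs_pos (al w)); pose proof (Rabs_pos (be w)); pose proof (Rabs_pos v1); pose proof (Rabs_pos v2);
      pose proof (Rabs_pos a1); pose proof (Rabs_pos a2). nra. }
    pose proof (n1_ge0 w). assert (H' : Rabs (n1 w) <= Cv * (Rabs (al w) + Rabs (be w))) by (rewrite Rabs_right; lra).
    apply sq_le_abs in H'.
    apply Rle_trans with (Cv * (Rabs (al w) + Rabs (be w)) * (Cv * (Rabs (al w) + Rabs (be w)))); auto.
    pose proof (sq_sum_le (Rabs (al w)) (Rabs (be w))) as Hs.
    assert (Ha : Rabs (al w) * Rabs (al w) = al w * al w) by (rewrite <- Rabs_mult, Rabs_right; [ring|apply Rle_ge, Rle_0_sqr]).
    assert (Hb : Rabs (be w) * Rabs (be w) = be w * be w) by (rewrite <- Rabs_mult, Rabs_right; [ring|apply Rle_ge, Rle_0_sqr]).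
    rewrite Ha, Hb in Hs. assert (0 <= Cv * Cv) by apply Rle_0_sqr.
    replace (Cv * (Rabs (al w) + Rabs (be w)) * (Cv * (Rabs (al w) + Rabs (be w)))) with
      ((Cv * Cv) * ((Rabs (al w) + Rabs (be w)) * (Rabs (al w) + Rabs (be w)))) by ring.
    replace (2 * (Cv * Cv) * (al w * al w + be w * be w)) with ((Cv * Cv) * (2 * (al w * al w + be w * be w))) by ring.
    apply Rmult_le_compat_l; auto. }
  assert (Lu : forall u, al u * al u + be u * be u <= (Ca * Ca) * (n1 u * n1 u)).
  { intros u. pose proof (abs_lin x1 x2 u). pose proof (abs_lin y1 y2 u). fold (al u) (be u) in *.
    pose proof (n1_ge0 u). pose proof (Rabs_pos x1); pose proof (Rabs_pos x2); pose proof (Rabs_pos y1); pose proof (Rabs_pos y2).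
    apply sq_le_abs in H. apply sq_le_abs in H0.
    replace (Ca * Ca * (n1 u * n1 u)) with (((Rabs x1 + Rabs x2) * n1 u + (Rabs y1 + Rabs y2) * n1 u) * ((Rabs x1 + Rabs x2) * n1 u + (Rabs y1 + Rabs y2) * n1 u)) by (unfold Ca; ring).
    assert (0 <= ((Rabs x1 + Rabs x2) * n1 u) * ((Rabs y1 + Rabs y2) * n1 u)) by (apply Rmult_le_pos; apply Rmult_le_pos; lra).
    lra. }
  set (C0 := 2 * (Cv * Cv) * (4 * S / (D*D)) * (2 * S) * (Ca * Ca)).
  assert (C00 : 0 <= C0).
  { unfold C0. assert (0 <= Cv * Cv) by apply Rle_0_sqr. assert (0 <= Ca * Ca) by apply Rle_0_sqr.
    assert (0 <= 4 * S / (D*D)) by (unfold Rdiv; apply Rmult_le_pos; [lra| apply Rlt_le, Rinv_0_lt_compat; auto]).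
    apply Rmult_le_pos; [apply Rmult_le_pos; [apply Rmult_le_pos; [apply Rmult_le_pos; lra | lra] | lra] | lra]. }
  assert (Main : forall n u, n1 (it N n u) * n1 (it N n u) <= C0 * (/ rho) ^ n * (n1 u * n1 u)).
  { intros n u. set (w := it N n u).
    pose proof (Lw w). pose proof (form_lower c1 e1 c2 e2 (al w) (be w) HD). fold D S in H0.
    pose proof (H2 n u). fold w in H3. pose proof (form_upper c1 e1 c2 e2 (al u) (be u)). fold S in H4.
    pose proof (Lu u). change (Gf c1 e1 c2 e2 (al w) (be w)) with (G w) in H0. change (Gf c1 e1 c2 e2 (al u) (be u)) with (G u) in H4.
    assert (0 <= (/ rho) ^ n) by (apply pow_le, Rlt_le, Rinv_0_lt_compat; lra).
    assert (0 <= 4 * S / (D*D)) by (unfold Rdiv; apply Rmult_le_pos; [lra| apply Rlt_le, Rinv_0_lt_compat; auto]).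
    assert (0 <= Cv * Cv) by apply Rle_0_sqr.
    assert (A1 : n1 w * n1 w <= 2 * (Cv * Cv) * (4 * S / (D*D)) * G w).
    { eapply Rle_trans; [apply H|].
      replace (2 * (Cv * Cv) * (4 * S / (D * D)) * G w) with ((2 * (Cv * Cv)) * (4 * S / (D * D) * G w)) by ring.
      apply Rmult_le_compat_l; [lra|auto]. }
    assert (A2 : G w <= (/rho)^n * (2 * S * (Ca * Ca) * (n1 u * n1 u))).
    { eapply Rle_trans; [apply H3|]. apply Rmult_le_compat_l; auto. eapply Rle_trans; [apply H4|].
      replace (2 * S * (Ca * Ca) * (n1 u * n1 u)) with ((2 * S) * (Ca * Ca * (n1 u * n1 u))) by ring.
      apply Rmult_le_compat_l; [lra|auto]. }
    eapply Rle_trans; [apply A1|]. unfold C0.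
    replace (2 * (Cv * Cv) * (4 * S / (D * D)) * (2 * S) * (Ca * Ca) * (/ rho) ^ n * (n1 u * n1 u)) with
      (2 * (Cv * Cv) * (4 * S / (D * D)) * ((/rho)^n * (2 * S * (Ca * Ca) * (n1 u * n1 u)))) by ring.
    apply Rmult_le_compat_l; auto. apply Rmult_le_pos; lra. }
  set (r := sqrt (/ rho)). set (K := sqrt C0 + 1).
  assert (r0 : 0 < r) by (apply sqrt_lt_R0, Rinv_0_lt_compat; lra).
  assert (r1 : r < 1).
  { unfold r. rewrite <- sqrt_1. apply sqrt_lt_1_alt. split. apply Rlt_le, Rinv_0_lt_compat; lra.
    rewrite <- Rinv_1. apply Rinv_lt_contravar; lra. }
  assert (rr : r * r = / rho) by (apply sqrt_sqrt, Rlt_le, Rinv_0_lt_compat; lra).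
  assert (K0 : 0 < K) by (unfold K; pose proof (sqrt_pos C0); lra).
  assert (KK : C0 <= K * K).
  { unfold K. pose proof (sqrt_sqrt C0 C00). pose proof (sqrt_pos C0). nra. }
  exists K, r. split; auto. split; [lra|]. intros n u.
  pose proof (Main n u). pose proof (n1_ge0 (it N n u)). pose proof (n1_ge0 u).
  assert (0 <= r ^ n) by (apply pow_le; lra).
  assert (E : (/ rho) ^ n = r ^ n * r ^ n) by (rewrite <- rr, Rpow_mult_distr; reflexivity).
  rewrite E in H.
  assert (0 <= K * r ^ n * n1 u) by (repeat apply Rmult_le_pos; lra).
  apply Rsqr_incr_0_var; auto. unfold Rsqr. eapply Rle_trans; [apply H|].
  replace (K * r ^ n * n1 u * (K * r ^ n * n1 u)) with ((K * K) * ((r ^ n * r ^ n) * (n1 u * n1 u))) by ring.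
  replace (C0 * (r ^ n * r ^ n) * (n1 u * n1 u)) with (C0 * ((r ^ n * r ^ n) * (n1 u * n1 u))) by ring.
  apply Rmult_le_compat_r; auto. apply Rmult_le_pos; apply Rmult_le_pos; lra.
Qed.
Lemma charpoly_R A p q : charpoly_is A p q ->
  IZR (m11 A) + IZR (m22 A) = - IZR p /\ IZR (m11 A) * IZR (m22 A) - IZR (m12 A) * IZR (m21 A) = IZR q.
Proof. intros [H1 H2]. unfold mtrace, mdet in *. split.
  - rewrite <- H1, opp_IZR, plus_IZR; ring.
  - rewrite <- H2, minus_IZR, !mult_IZR; ring. Qed.

Lemma indep_det v a : v <> vzero -> lin_indep2 v a -> fst v * snd a - snd v * fst a <> 0.
Proof. intros Hv Hi Hd. destruct v as [v1 v2], a as [a1 a2]; simpl in *.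
  destruct (Req_dec a2 0), (Req_dec v2 0).
  - destruct (Hi a1 (-v1)) as [E1 E2]. unfold vadd, vscale, vzero; simpl. apply vec_eq; simpl; subst; nra.
    destruct (Req_dec a1 0), (Req_dec v1 0); try lra. apply Hv; subst; unfold vzero; f_equal; lra.
  - destruct (Hi a2 (-v2)) as [E1 E2]. apply vec_eq; simpl; nra. lra.
  - destruct (Hi a2 (-v2)) as [E1 E2]. apply vec_eq; simpl; nra. lra.
  - destruct (Hi a2 (-v2)) as [E1 E2]. apply vec_eq; simpl; nra. lra. Qed.

Lemma lin_indep_nz v a : lin_indep2 v a -> v <> vzero.
Proof. intros Hi Hv. destruct (Hi 1 0) as [E _]. rewrite Hv. apply vec_eq; simpl; ring. lra. Qed.

Lemma exp_roots A p q v : expanding A -> charpoly_is A p q -> lin_indep2 v (mapply A v) ->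
  forall lr li, lr*lr - li*li + IZR p*lr + IZR q = 0 -> 2*lr*li + IZR p*li = 0 -> lr*lr + li*li > 1.
Proof. intros He Hc Hi lr li R1 R2. destruct (charpoly_R A p q Hc) as [HP HQ].
  assert (Hev : is_eigenvalue A (lr, li)); [| apply He in Hev; unfold cnorm2 in Hev; simpl in Hev; lra].
  unfold is_eigenvalue.
  destruct v as [v1 v2]. unfold mapply in *; simpl in *.
  set (a11 := IZR (m11 A)) in *. set (a12 := IZR (m12 A)) in *.
  set (a21 := IZR (m21 A)) in *. set (a22 := IZR (m22 A)) in *.
  set (P := IZR p) in *. set (Q := IZR q) in *. clearbody a11 a12 a21 a22 P Q.
  set (a1 := a11 * v1 + a12 * v2) in *. set (a2 := a21 * v1 + a22 * v2) in *.
  set (mr := - P - lr). set (mi := - li).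
  assert (Hsq1 : a11 * a1 + a12 * a2 = - P * a1 - Q * v1) by (rewrite <- HQ; unfold a1, a2; nra).
  assert (Hsq2 : a21 * a1 + a22 * a2 = - P * a2 - Q * v2) by (rewrite <- HQ; unfold a1, a2; nra).
  assert (Hq : Q = -(lr*lr - li*li + P*lr)) by lra.
  { exists (a1 - mr * v1, - mi * v1), (a2 - mr * v2, - mi * v2). split; [|split].
    - apply NNPP; intro Hn. apply not_or_and in Hn. destruct Hn as [Hn1 Hn2].
      apply NNPP in Hn1. apply NNPP in Hn2.
      destruct (Hi mr (-1)) as [_ E]. unfold vadd, vscale, vzero; simpl.
      injection Hn1 as Hn1 _. injection Hn2 as Hn2 _. apply vec_eq; simpl; lra. lra.
    - unfold cmul; simpl. apply vec_eq; simpl.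
      + transitivity ((a11 * a1 + a12 * a2) - mr * a1); [unfold mr, a1, a2; ring|]. rewrite Hsq1, Hq. unfold mr, mi; ring.
      + transitivity (- mi * a1); [unfold a1; ring|]. unfold mi, mr. transitivity (li * a1 + v1 * (2*lr*li + P*li)); [rewrite R2; ring | ring].
    - unfold cmul; simpl. apply vec_eq; simpl.
      + transitivity ((a21 * a1 + a22 * a2) - mr * a2); [unfold mr, a1, a2; ring|]. rewrite Hsq2, Hq. unfold mr, mi; ring.
      + transitivity (- mi * a2); [unfold a2; ring|]. unfold mi, mr. transitivity (li * a2 + v2 * (2*lr*li + P*li)); [rewrite R2; ring | ring]. }
Qed.
Lemma concrete_contr A p q v : expanding A -> charpoly_is A p q -> lin_indep2 v (mapply A v) ->
  (exists K r, contr (minv_apply A) K r) /\ IZR (mdet A) <> 0.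
Proof. intros He Hc Hi. pose proof (exp_roots A p q v He Hc Hi) as Hex.
  pose proof Hc as [_ Hdet]. destruct (charpoly_R A p q Hc) as [HP HQ].
  assert (Hq0 : IZR q <> 0).
  { intro H0. specialize (Hex 0 0). rewrite H0 in Hex. lra. }
  assert (Hd : IZR (mdet A) = IZR (m11 A) * IZR (m22 A) - IZR (m12 A) * IZR (m21 A)).
  { unfold mdet. rewrite minus_IZR, !mult_IZR. reflexivity. }
  split; [| rewrite Hdet; auto].
  assert (HQ2 : IZR q > 1 -> IZR q >= 2).
  { intros H. apply lt_IZR in H. apply Rle_ge, IZR_le. lia. }
  destruct (growth (IZR p) (IZR q) HQ2 Hex) as [c1 [e1 [c2 [e2 [rho [HD [Hrho Hg]]]]]]].
  pose proof (indep_det v (mapply A v) (lin_indep_nz _ _ Hi) Hi) as HDel.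
  destruct v as [v1 v2]. unfold mapply in HDel |- *. simpl in HDel |- *.
  set (a11 := IZR (m11 A)) in *. set (a12 := IZR (m12 A)) in *.
  set (a21 := IZR (m21 A)) in *. set (a22 := IZR (m22 A)) in *.
  set (a1 := a11 * v1 + a12 * v2) in *. set (a2 := a21 * v1 + a22 * v2) in *.
  set (Del := v1 * a2 - v2 * a1) in *.
  apply (contr_gen (minv_apply A) (mapply A) (a2/Del) (-a1/Del) (-v2/Del) (v1/Del) v1 v2 a1 a2 c1 e1 c2 e2 rho); auto.
  - intros u. unfold mapply, minv_apply. rewrite Hd. fold a11 a12 a21 a22. apply vec_eq; simpl; field; rewrite HQ; auto.
  - intros u. unfold mapply. fold a11 a12 a21 a22. simpl.
    replace (a2 / Del * (a11 * fst u + a12 * snd u) + - a1 / Del * (a21 * fst u + a22 * snd u))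
      with (- IZR q * (- v2 / Del * fst u + v1 / Del * snd u)) by (rewrite <- HQ; unfold a1, a2; field; auto).
    replace (- v2 / Del * (a11 * fst u + a12 * snd u) + v1 / Del * (a21 * fst u + a22 * snd u))
      with ((a2 / Del * fst u + - a1 / Del * snd u) - IZR p * (- v2 / Del * fst u + v1 / Del * snd u)).
    apply Hg. replace (IZR p) with (- (a11 + a22)) by lra. unfold a1, a2; field; auto.
  - intros u. split; unfold Del; field; exact HDel.
Qed.
Lemma abstract_main N N' L K r K' r' f m : linear N -> linear N' -> linear L -> contr N K r -> contr N' K' r' ->
  (forall u w, N u = N w -> u = w) -> (forall u, L (N u) = vscale (-1) (N' (L u))) ->
  connected2 (Fs N f m) -> connected2 (Fs N' (fun i => L (f i)) m).
Proof. intros HN HN' HL Hc Hc' Hinj HLN Hconn. apply (stepB N' K' r'); auto.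
  intros Pc HPc k j Hk Hj HP. apply (stepA N K r f m HN Hc Hinj Hconn Pc) with k; auto.
  intros k' j' Hk' Hj' Ha. apply HPc; auto. apply (transfer N N' L K r K' r'); auto. Qed.

Lemma minv_pow_it A i u : minv_pow A i u = it (minv_apply A) i u.
Proof. induction i; simpl; congruence. Qed.

Lemma ps_eq A dig n : partial_sum A dig n = PS (minv_apply A) dig n.
Proof. induction n; simpl; auto. rewrite IHn, minv_pow_it. reflexivity. Qed.

Lemma self_affine_iff A D x : self_affine A D x <-> Tset (minv_apply A) (fun _ => D) x.
Proof. split.
  - intros [dig [HD [H1 H2]]]. exists dig; split; auto. destruct x as [x1 x2].
    apply cv_of_comp; simpl in *.
    + intros e He; destruct (H1 e He) as [M HM]; exists M; intros; rewrite <- ps_eq; auto.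
    + intros e He; destruct (H2 e He) as [M HM]; exists M; intros; rewrite <- ps_eq; auto.
  - intros [dig [HD Hc]]. exists dig; split; auto. destruct (comp_of_cv _ _ Hc) as [H1 H2]. split.
    + intros e He; destruct (H1 e He) as [M HM]; exists M; intros; rewrite ps_eq; auto.
    + intros e He; destruct (H2 e He) as [M HM]; exists M; intros; rewrite ps_eq; auto. Qed.

Lemma conn_ext S S' : (forall x, S x <-> S' x) -> connected2 S -> connected2 S'.
Proof. intros E Hc [U [V [HU [HV [Hcov [[p [Hp HUp]] [[q [Hq HVq]] Hd]]]]]]]. apply Hc.
  exists U, V. repeat split; auto.
  - intros x Hx; apply Hcov, E; auto.
  - exists p; split; auto; apply E; auto.
  - exists q; split; auto; apply E; auto.
  - intros x Hx; apply Hd, E; auto. Qed.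

Lemma minv_lin A : linear (minv_apply A).
Proof. unfold minv_apply; split; intros; apply vec_eq; simpl; unfold Rdiv; ring. Qed.

Lemma mapply_lin A : linear (mapply A).
Proof. unfold mapply; split; intros; apply vec_eq; simpl; ring. Qed.

Lemma mdet_R A : IZR (mdet A) = IZR (m11 A) * IZR (m22 A) - IZR (m12 A) * IZR (m21 A).
Proof. unfold mdet. rewrite minus_IZR, !mult_IZR. reflexivity. Qed.

Lemma MN A u : IZR (mdet A) <> 0 -> mapply A (minv_apply A u) = u.
Proof. intros H. rewrite mdet_R in H. unfold mapply, minv_apply. rewrite mdet_R. apply vec_eq; simpl; field; auto. Qed.

Lemma NM A u : IZR (mdet A) <> 0 -> minv_apply A (mapply A u) = u.
Proof. intros H. rewrite mdet_R in H. unfold mapply, minv_apply. rewrite mdet_R. apply vec_eq; simpl; field; auto. Qed.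

Lemma CH A p q u : charpoly_is A p q ->
  mapply A (mapply A u) = vadd (vscale (- IZR p) (mapply A u)) (vscale (- IZR q) u).
Proof. intros Hc. destruct (charpoly_R A p q Hc) as [HP HQ]. rewrite <- HQ.
  replace (- IZR p) with (IZR (m11 A) + IZR (m22 A)) by lra.
  unfold mapply; apply vec_eq; simpl; ring. Qed.

Definition cal (v a u : vec) : R := (snd a * fst u - fst a * snd u) / (fst v * snd a - snd v * fst a).
Definition cbe (v a u : vec) : R := (fst v * snd u - snd v * fst u) / (fst v * snd a - snd v * fst a).

Lemma coord_A A p q v u : charpoly_is A p q -> fst v * snd (mapply A v) - snd v * fst (mapply A v) <> 0 ->
  cal v (mapply A v) (mapply A u) = - IZR q * cbe v (mapply A v) u /\
  cbe v (mapply A v) (mapply A u) = cal v (mapply A v) u - IZR p * cbe v (mapply A v) u.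
Proof. intros Hc HD. destruct (charpoly_R A p q Hc) as [HP HQ]. unfold cal, cbe.
  destruct v as [v1 v2]. unfold mapply in *; simpl in *. split.
  - rewrite <- HQ; field; auto.
  - replace (IZR p) with (- (IZR (m11 A) + IZR (m22 A))) by lra. field; auto. Qed.

Lemma coord_rec v a u : fst v * snd a - snd v * fst a <> 0 ->
  u = vadd (vscale (cal v a u) v) (vscale (cbe v a u) a).
Proof. intros HD. unfold cal, cbe. apply vec_eq; simpl; field; auto. Qed.

Definition Lf (v a w z u : vec) : vec := vadd (vscale (cal v a u) w) (vscale (cbe v a u) z).

Lemma Lf_lin v a w z : linear (Lf v a w z).
Proof. unfold Lf, cal, cbe; split; intros; apply vec_eq; simpl; unfold Rdiv; ring. Qed.

Lemma one_dir A B p q v w (cA cB dd : nat -> R) m :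
  expanding A -> expanding B -> charpoly_is A p q -> charpoly_is B (- p)%Z q ->
  lin_indep2 v (mapply A v) -> lin_indep2 w (mapply B w) -> (forall i, cB i = - cA i) ->
  connected2 (self_affine A (fun x => exists i, (i < m)%nat /\ x = vadd (vscale (cA i) (mapply A v)) (vscale (dd i) v))) ->
  connected2 (self_affine B (fun x => exists i, (i < m)%nat /\ x = vadd (vscale (cB i) (mapply B w)) (vscale (dd i) w))).
Proof. intros HeA HeB HcA HcB HiA HiB Hc Hconn.
  destruct (concrete_contr A p q v HeA HcA HiA) as [[K [r HK]] HdA].
  destruct (concrete_contr B (-p) q w HeB HcB HiB) as [[K' [r' HK']] HdB].
  pose proof (indep_det v (mapply A v) (lin_indep_nz _ _ HiA) HiA) as HD.
  set (a := mapply A v) in *. set (z := vscale (-1) (mapply B w)).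
  set (L := Lf v a w z).
  set (f := fun i => vadd (vscale (cA i) a) (vscale (dd i) v)).
  assert (Lv : L v = w). { unfold L, Lf, cal, cbe. apply vec_eq; simpl; field; auto. }
  assert (La : L a = z). { unfold L, Lf, cal, cbe. apply vec_eq; simpl; field; auto. }
  assert (LA : forall x, L (mapply A x) = vscale (-1) (mapply B (L x))).
  { intros x. destruct (coord_A A p q v x HcA HD) as [E1 E2]. fold a in E1, E2.
    assert (E3 : L (mapply A x) = vadd (vscale (- IZR q * cbe v a x) w) (vscale (cal v a x - IZR p * cbe v a x) z)).
    { unfold L, Lf. rewrite E1, E2. reflexivity. }
    rewrite E3. unfold L, Lf. rewrite (proj1 (mapply_lin B)), !(proj2 (mapply_lin B)).
    unfold z. rewrite (proj2 (mapply_lin B)), (CH B (-p) q w HcB). rewrite opp_IZR.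
    apply vec_eq; simpl; ring. }
  assert (LN : forall u, L (minv_apply A u) = vscale (-1) (minv_apply B (L u))).
  { intros u. rewrite <- (MN A u HdA) at 2. rewrite LA, (proj2 (minv_lin B)), NM by auto.
    apply vec_eq; simpl; ring. }
  assert (Hinj : forall u u', minv_apply A u = minv_apply A u' -> u = u').
  { intros u u' E. rewrite <- (MN A u HdA), <- (MN A u' HdA), E. reflexivity. }
  pose proof (abstract_main (minv_apply A) (minv_apply B) L K r K' r' f m (minv_lin A) (minv_lin B)
    (Lf_lin v a w z) HK HK' Hinj LN) as Hm.
  assert (Lf_i : forall i, L (f i) = vadd (vscale (cB i) (mapply B w)) (vscale (dd i) w)).
  { intros i. unfold L, f, Lf, cal, cbe, z. rewrite Hc. apply vec_eq; simpl; field; auto. }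
  eapply conn_ext; [| apply Hm; eapply conn_ext; [|exact Hconn]].
  - intros x. rewrite self_affine_iff. unfold Fs. split; intros [dig [Hd Hx]]; exists dig; split; auto;
      intros i; destruct (Hd i) as [k [Hk E]]; exists k; split; auto; rewrite E; [rewrite Lf_i| rewrite <- Lf_i]; reflexivity.
  - intros x. rewrite self_affine_iff. unfold Fs. split; intros [dig [Hd Hx]]; exists dig; split; auto.
Qed.

Theorem theorem3p4 (A B : mat2) (p q : Z) (v w : vec) (c d : nat -> Z) :
  expanding A -> expanding B ->
  charpoly_is A p q -> charpoly_is B (- p)%Z q ->
  v <> vzero -> w <> vzero ->
  lin_indep2 v (mapply A v) -> lin_indep2 w (mapply B w) ->
  (forall i j : nat, (i < Z.abs_nat q)%nat -> (j < Z.abs_nat q)%nat -> i <> j ->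
     vadd (vscale (IZR (c i)) (mapply A v)) (vscale (IZR (d i)) v) <>
     vadd (vscale (IZR (c j)) (mapply A v)) (vscale (IZR (d j)) v)) ->
  let D := fun x : vec => exists i : nat, (i < Z.abs_nat q)%nat /\
             x = vadd (vscale (IZR (c i)) (mapply A v)) (vscale (IZR (d i)) v) in
  let D' := fun x : vec => exists i : nat, (i < Z.abs_nat q)%nat /\
             x = vadd (vscale (- IZR (c i)) (mapply B w)) (vscale (IZR (d i)) w) in
  connected2 (self_affine A D) <-> connected2 (self_affine B D').
Proof. intros HeA HeB HcA HcB Hv Hw HiA HiB _ D D'. unfold D, D'. split.
  - apply (one_dir A B p q v w (fun i => IZR (c i)) (fun i => - IZR (c i)) (fun i => IZR (d i))); auto.
  - apply (one_dir B A (-p) q w v (fun i => - IZR (c i)) (fun i => IZR (c i)) (fun i => IZR (d i))); auto.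
    rewrite Z.opp_involutive; auto. intros; ring.
Qed.
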